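(* Let $3\le l\le 9$ and let $k, r_1,\dots,r_l$ be integers with $r_1\le r_2\le\cdots\le r_l\le k$ and $2k+3\le r_1+r_2+r_3$. Then $$c(\mathbf r;k)=\binom{k+2}{2}-\sum_{i=1}^l\binom{k-r_i+2}{2}>0.$$
   Context: $c(\mathbf r;k)$ is the virtual dimension of the degree-$k$ part of $F[x,y,z]$ modulo the ideal generated by $p_i^{r_i}$ for $l$ points in $\mathbb P^2$; under the hypotheses all $r_i\le k$, so it is given by the displayed formula. *)

(* Defs.v *)
From mathcomp Require Import all_boot all_order all_algebra.
Set Implicit Arguments. Unset Strict Implicit. Unset Printing Implicit Defensive.
Import Order.TTheory GRing.Theory Num.Theory.
Local Open Scope ring_scope.

(* Binomial coefficient (n choose 2) for an integer n, taken to be 0 for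
   n < 0 (never used with negative n under the theorem's hypotheses). *)
Definition binom2z (n : int) : int :=
  if n < 0 then 0 else ('C(`|n|%N, 2))%:Z.

(* Virtual dimension c(r;k) = C(k+2,2) - sum_{i=1}^l C(k-r_i+2,2);
   the points are indexed 0..l-1, i.e. r_i is r (i-1). *)
Definition cvirt (l : nat) (r : nat -> int) (k : int) : int :=
  binom2z (k + 2) - \sum_(i < l) binom2z (k - r i + 2).

(* Main.v *)
Require Import Defs.
From mathcomp Require Import all_boot all_order all_algebra.
From mathcomp Require Import zify ring lra.
Import Order.TTheory GRing.Theory Num.Theory.
Local Open Scope ring_scope.

Lemma binC2 (n : nat) : ('C(n, 2) * 2 = n * (n - 1))%N.
Proof. elim: n => [|n IH] //. rewrite binS bin1 mulnDl IH. case: n {IH} => [|n] //=; nia. Qed.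

Lemma b2 (n : int) : 0 <= n -> 2 * binom2z n = n * (n - 1).
Proof.
case: n => [n|n] // _. rewrite /binom2z /= mulrC.
have := binC2 n. move=> H. rewrite -[2]/(2%:Z) -PoszM H PoszM.
case: n {H} => [|n] //=; rewrite subn1 /= -addn1 PoszD addrK.
Qed.

Lemma b2ge0 (n : int) : 0 <= binom2z n.
Proof. rewrite /binom2z; case: ifP => //. Qed.

Lemma b2mono (a b : int) : 0 <= a -> a <= b -> binom2z a <= binom2z b.
Proof.
move=> ha hab. have hb : 0 <= b by lia.
have [->|neq] := eqVneq a b; first done.
have h : 0 <= (b - a) * (b + a - 1) by apply: mulr_ge0; lia.
have := b2 a ha; have := b2 b hb. nia.
Qed.

Theorem mainTheorem8 (l : nat) (k : int) (r : nat -> int) :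
  (3 <= l <= 9)%N ->
  (forall i j : nat, (i <= j < l)%N -> r i <= r j) ->
  r l.-1 <= k ->
  2 * k + 3 <= r 0%N + r 1%N + r 2%N ->
  0 < cvirt l r k.
Proof.
move=> /andP[l3 l9] mono rk hsum.
have rik : forall i, (i < l)%N -> r i <= k.
  move=> i il; apply: le_trans rk; apply: mono; apply/andP; split => //; lia.
have r01 := mono 0%N 1%N ltac:(lia). have r12 := mono 1%N 2%N ltac:(lia).
have r2k := rik 2%N ltac:(lia).
set f := fun i : nat => binom2z (k - r i + 2).
have tail : \sum_(3 <= i < l) f i <= 6 * f 2%N.
  apply: (@le_trans _ _ (\sum_(3 <= i < l) f 2%N)).
    rewrite big_nat [X in _ <= X]big_nat; apply: ler_sum => i /andP[i3 il].
    apply: b2mono; first by have := rik i il; lia.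
    have := mono 2%N i ltac:(lia); lia.
  rewrite sumr_const_nat -[X in X <= _]mulr_natl.
  have := b2ge0 (k - r 2%N + 2). rewrite -/(f 2%N) => h.
  have h6 : ((l - 3)%:R : int) <= 6 by rewrite ler_nat; lia.
  nia.
have split : \sum_(i < l) binom2z (k - r i + 2) = f 0%N + f 1%N + f 2%N + \sum_(3 <= i < l) f i.
  rewrite -(big_mkord xpredT f) (big_cat_nat _ (n := 3)) //=. congr (_ + _).
  by rewrite !big_nat_recr //= big_geq // add0r.
rewrite /cvirt split.
have e0 := b2 (k - r 0%N + 2) ltac:(lia).
have e1 := b2 (k - r 1%N + 2) ltac:(lia).
have e2 := b2 (k - r 2%N + 2) ltac:(lia).
have ek := b2 (k + 2) ltac:(lia).
rewrite /f in tail e0 e1 e2 *.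
nia.
Qed.
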